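(* Let $F$ be a field of characteristic zero, $G$ a finite group, $A$ a $G$-graded PI-algebra (GPI-algebra) over $F$, and $d_1,\dots,d_m$ positive integers; put $d=d_1+\cdots+d_m$. Let $\mathcal{U}(d_1,\dots,d_m;A)$ be the subalgebra of $UT(d_1,\dots,d_m;\mathcal{U}_G(A))$ generated by the generic matrices $\xi_k^{(g)}$, $k\in\mathbb{N}$, $g\in G$, defined as follows: for $1\le r\le s\le m$ and indices $i,j$ with $d_1+\cdots+d_{r-1}+1\le i\le d_1+\cdots+d_r$ and $d_1+\cdots+d_{s-1}+1\le j\le d_1+\cdots+d_s$, the $(i,j)$ entry of $\xi_k^{(g)}$ is $x_{ij,k}^{(g)}+T_G(A)\in\mathcal{U}_G(A)$, where the $x_{ij,k}^{(g)}$ are pairwise distinct free generators of degree $g$; all entries below the diagonal blocks are $0$. Then the graded homomorphism $F\langle X\rangle\to\mathcal{U}(d_1,\dots,d_m;A)$ sending $x_k^{(g)}\mapsto\xi_k^{(g)}$ is surjective with kernel $T_G(UT(d_1,\dots,d_m;A))$; in particular \[\mathcal{U}(d_1,\dots,d_m;A)\cong \frac{F\langle X\rangle}{T_G(UT(d_1,\dots,d_m;A))}.\]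
   Context: All algebras are associative and unitary. $X=\bigcup_{g\in G}X^g$ is a disjoint union of countable sets, $X^g=\{x_1^{(g)},x_2^{(g)},\dots\}$ consisting of variables of degree $g$, and $F\langle X\rangle$ is the free associative algebra on $X$, $G$-graded by declaring a monomial $x_{i_1}\cdots x_{i_k}$ to have degree $\deg(x_{i_1})\cdots\deg(x_{i_k})$. For a $G$-graded algebra $A=\bigoplus_g A^g$, a graded polynomial $f(x_1,\dots,x_t)$ is a graded identity of $A$ if $f(a_1,\dots,a_t)=0$ whenever $a_i\in A^{\deg(x_i)}$; $T_G(A)$ is the ideal of all graded identities, and $\mathcal{U}_G(A)=F\langle X\rangle/T_G(A)$ is the relatively free $G$-graded algebra of $A$ (here taken over a sufficiently large set of graded variables, including the $x_{ij,k}^{(g)}$). A GPI-algebra is a $G$-graded algebra with a nonzero graded identity. $UT(d_1,\dots,d_m;A)$ denotes the algebra of block upper-triangular matrices in $M_{d}(A)$ whose $(r,s)$ block ($r\le s$) is an arbitrary $d_r\times d_s$ matrix over $A$ and whose blocks below the diagonal are zero; it is $G$-graded by letting its degree-$g$ component consist of the matrices all of whose entries lie in $A^g$. *)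

(* Defs.v *)
From HB Require Import structures.
From mathcomp Require Import all_boot all_order all_algebra all_fingroup.
From mathcomp Require Import generic_quotient finmap.
From mathcomp.multinomials Require Import monalg.
From Stdlib Require Import ClassicalEpsilon.

Set Implicit Arguments.
Unset Strict Implicit.
Unset Printing Implicit Defensive.

Import GRing.Theory.
Local Open Scope ring_scope.

(* The free associative unitary algebra F<V> on a set V of variables:  *)
(* the monoid algebra of the free monoid {fmonom V} (words over V).    *)
Definition FreeAlg (F : fieldType) (V : choiceType) := {malg F[{fmonom V}]}.

Definition pvar (F : fieldType) (V : choiceType) (v : V) : FreeAlg F V :=
  << fmu v >>.

(* Evaluation of f in F<V> in a ring S, the scalars of F acting through s
   (s c = c * 1 for an F-algebra S), the variables through phi.          *)
Definition evalp (F : fieldType) (V : choiceType) (S : pzRingType)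
    (s : F -> S) (phi : V -> S) (f : FreeAlg F V) : S :=
  \sum_(m <- msupp f) s (f@_m) * \prod_(v <- (m : seq V)) phi v.

Definition graded_identity (F : fieldType) (V : choiceType) (G : finGroupType)
    (deg : V -> G) (S : pzRingType) (s : F -> S) (Sg : G -> S -> Prop)
    (f : FreeAlg F V) : Prop :=
  forall phi : V -> S, (forall v, Sg (deg v) (phi v)) -> evalp s phi f = 0.

Definition is_Ggrading (F : fieldType) (G : finGroupType) (A : algType F)
    (Ag : G -> A -> Prop) : Prop :=
  [/\ forall g, [/\ Ag g 0, (forall a b, Ag g a -> Ag g b -> Ag g (a + b))
                  & (forall (c : F) a, Ag g a -> Ag g (c *: a))],
      forall a : A, exists a_ : G -> A, (forall g, Ag g (a_ g)) /\ a = \sum_(g : G) a_ g,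
      forall a_ : G -> A, (forall g, Ag g (a_ g)) -> \sum_(g : G) a_ g = 0 ->
        forall g, a_ g = 0
    & forall (g h : G) (a b : A), Ag g a -> Ag h b -> Ag (g * h)%g (a * b)].

(* The standard graded variables x_k^(g) of F<X>, X = G x N, deg = first component *)
Definition Xvar (G : finGroupType) := (G * nat)%type.
(* The variables x_{ij,k}^(g) used for the relatively free algebra U_G(A) *)
Definition XUvar (G : finGroupType) := (G * (nat * nat * nat))%type.

Definition TG (F : fieldType) (G : finGroupType) (A : algType F)
    (Ag : G -> A -> Prop) (V : choiceType) (deg : V -> G) (f : FreeAlg F V) :=
  graded_identity deg (GRing.in_alg A) Ag f.

Definition is_GPI (F : fieldType) (G : finGroupType) (A : algType F)
    (Ag : G -> A -> Prop) : Prop :=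
  exists f : FreeAlg F (Xvar G), f != 0 /\ TG Ag (@fst G nat) f.

(* Block structure: ds = [:: d_1; ...; d_m], d = sumn ds; the (0-based)
   row/column index i lies in block number blk ds i (0-based).          *)
Definition blk (ds : seq nat) (i : nat) : nat :=
  count (fun r => sumn (take r.+1 ds) <= i)%N (iota 0 (size ds)).

Definition is_blockUT (ds : seq nat) (R : pzRingType) (M : 'M[R]_(sumn ds)) : Prop :=
  forall i j : 'I_(sumn ds), (blk ds j < blk ds i)%N -> M i j = 0.

Definition UTg (F : fieldType) (G : finGroupType) (A : algType F)
    (Ag : G -> A -> Prop) (ds : seq nat) (g : G) (M : 'M[A]_(sumn ds)) : Prop :=
  is_blockUT M /\ forall i j, Ag g (M i j).

(* T_G(UT(d_1,...,d_m;A)) (UT is a subalgebra of M_d(A), so evaluations are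
   computed in M_d(A), the scalars acting as scalar matrices). *)
Definition TG_UT (F : fieldType) (G : finGroupType) (A : algType F)
    (Ag : G -> A -> Prop) (ds : seq nat) (f : FreeAlg F (Xvar G)) : Prop :=
  graded_identity (@fst G nat) (fun c : F => (c%:A : A)%:M) (@UTg F G A Ag ds) f.

Definition pbool (P : Prop) : bool :=
  if excluded_middle_informative P then true else false.

Lemma pboolP (P : Prop) : reflect P (pbool P).
Proof. by rewrite /pbool; case: excluded_middle_informative => h; constructor. Qed.

Section ProdMorph.
Variables (V : choiceType) (S : nzRingType) (phi : V -> S).
Definition prodv (m : fmonom V) : S := \prod_(v <- (m : seq V)) phi v.
Lemma prodv_mmorph : mmorphism prodv.
Proof.
split; last by rewrite /prodv fm1 big_nil.
by move=> x y; rewrite /prodv fmM big_cat.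
Qed.
HB.instance Definition _ := isMultiplicative.Build (fmonom V) S prodv prodv_mmorph.
End ProdMorph.

Section TGIdeal.
Variables (F : fieldType) (G : finGroupType) (A : algType F)
  (Ag : G -> A -> Prop) (V : choiceType) (deg : V -> G).

Local Notation R := (FreeAlg F V).

Lemma evalpE (phi : V -> A) (f : R) :
  evalp (GRing.in_alg A) phi f = mmap (GRing.in_alg A) (prodv phi) f.
Proof. by []. Qed.

Lemma evalpM (phi : V -> A) (f g : R) :
  evalp (GRing.in_alg A) phi (f * g) =
  evalp (GRing.in_alg A) phi f * evalp (GRing.in_alg A) phi g.
Proof.
rewrite !evalpE.
have := @commr_mmap_is_multiplicative _ _ _ (GRing.in_alg A) (prodv phi).
case=> [g0 m m'|-> _] //; exact: comm_alg.
Qed.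

Lemma evalpB (phi : V -> A) (f g : R) :
  evalp (GRing.in_alg A) phi (f - g) =
  evalp (GRing.in_alg A) phi f - evalp (GRing.in_alg A) phi g.
Proof. by rewrite !evalpE mmapB. Qed.

Lemma evalp0 (phi : V -> A) : evalp (GRing.in_alg A) phi 0 = 0.
Proof. by rewrite !evalpE mmap0. Qed.

Definition TGb : {pred R} := fun f => pbool (TG Ag deg f).

Lemma TGb_zmod : zmod_closed TGb.
Proof.
split; first by apply/pboolP => phi _; rewrite evalp0.
move=> f g /pboolP hf /pboolP hg; apply/pboolP => phi hphi.
by rewrite evalpB hf // hg // subr0.
Qed.

HB.instance Definition _ := GRing.isZmodClosed.Build R TGb TGb_zmod.

Lemma TGbMl (a f : R) : f \in TGb -> a * f \in TGb.
Proof.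
move=> /pboolP hf; apply/pboolP => phi hphi.
by rewrite evalpM hf // mulr0.
Qed.

Lemma TGbMr (a f : R) : f \in TGb -> f * a \in TGb.
Proof.
move=> /pboolP hf; apply/pboolP => phi hphi.
by rewrite evalpM hf // mul0r.
Qed.

Definition UG := Quotient.quot TGb.
HB.instance Definition _ := Choice.on UG.
HB.instance Definition _ := GRing.Zmodule.on UG.

Local Open Scope quotient_scope.

Definition UG_one : UG := lift_cst UG 1.
Definition UG_mul := lift_op2 UG *%R.

Lemma pi_UG_one : \pi_UG 1 = UG_one.
Proof. by unlock UG_one. Qed.

Lemma pi_UG_mul : {morph \pi_UG : x y / x * y >-> UG_mul x y}.
Proof.
move=> x y; unlock UG_mul; apply/eqP; rewrite piE Quotient.equivE.
have hx : x - repr (\pi_UG x) \in TGb by rewrite Quotient.idealrBE reprK.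
have hy : y - repr (\pi_UG y) \in TGb by rewrite Quotient.idealrBE reprK.
move: (repr (\pi_UG x)) (repr (\pi_UG y)) hx hy => x' y' hx hy.
have -> : x * y - x' * y' = x * (y - y') + (x - x') * y'.
  by rewrite mulrBr mulrBl addrA subrK.
by apply: rpredD; [apply: TGbMl | apply: TGbMr].
Qed.

Lemma UG_mulA : associative UG_mul.
Proof.
by move=> x y z; rewrite -[x]reprK -[y]reprK -[z]reprK -!pi_UG_mul mulrA.
Qed.
Lemma UG_mul1q : left_id UG_one UG_mul.
Proof. by move=> x; rewrite -[x]reprK -pi_UG_one -pi_UG_mul mul1r. Qed.
Lemma UG_mulq1 : right_id UG_one UG_mul.
Proof. by move=> x; rewrite -[x]reprK -pi_UG_one -pi_UG_mul mulr1. Qed.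
Lemma UG_mulDl : left_distributive UG_mul +%R.
Proof.
move=> x y z; rewrite -[x]reprK -[y]reprK -[z]reprK.
by rewrite -!pi_addr -!pi_UG_mul mulrDl pi_addr.
Qed.
Lemma UG_mulDr : right_distributive UG_mul +%R.
Proof.
move=> x y z; rewrite -[x]reprK -[y]reprK -[z]reprK.
by rewrite -!pi_addr -!pi_UG_mul mulrDr pi_addr.
Qed.

HB.instance Definition _ := GRing.Zmodule_isPzRing.Build UG
  UG_mulA UG_mul1q UG_mulq1 UG_mulDl UG_mulDr.

Definition piUG (f : R) : UG := \pi_UG f.

End TGIdeal.

Section Generic.
Variables (F : fieldType) (G : finGroupType) (A : algType F)
  (Ag : G -> A -> Prop) (ds : seq nat).
Local Notation d := (sumn ds).

Definition UGA : pzRingType := UG Ag (@fst G (nat * nat * nat)).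

Definition piU (f : FreeAlg F (XUvar G)) : UGA := piUG Ag (@fst G _) f.

Definition xU (g : G) (i j k : nat) : FreeAlg F (XUvar G) :=
  pvar F ((g, (i, j, k)) : XUvar G).

Definition xi (g : G) (k : nat) : 'M[UGA]_d :=
  \matrix_(i, j) if (blk ds i <= blk ds j)%N then piU (xU g i j k) else 0.

Definition scalU (c : F) : 'M[UGA]_d :=
  (piU ((c%:MP : FreeAlg F (XUvar G))))%:M.

Inductive in_Ud : 'M[UGA]_d -> Prop :=
  | Ud_gen g k : in_Ud (xi g k)
  | Ud_one : in_Ud 1
  | Ud_scale c M : in_Ud M -> in_Ud (scalU c * M)
  | Ud_add M N : in_Ud M -> in_Ud N -> in_Ud (M + N)
  | Ud_mul M N : in_Ud M -> in_Ud N -> in_Ud (M * N).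

Definition Phi (f : FreeAlg F (Xvar G)) : 'M[UGA]_d :=
  evalp scalU (fun v : Xvar G => xi v.1 v.2) f.

End Generic.

(* Main.v *)
Require Import Defs.
From HB Require Import structures.
From mathcomp Require Import all_boot all_order all_algebra all_fingroup.
From mathcomp Require Import generic_quotient finmap.
From mathcomp.multinomials Require Import monalg.
Set Implicit Arguments.
Unset Strict Implicit.
Unset Printing Implicit Defensive.
Import GRing.Theory.
Local Open Scope ring_scope.

Local Open Scope quotient_scope.

Section EvalGen.
Variables (F : fieldType) (V : choiceType) (S : pzRingType) (s : F -> S) (phi : V -> S).
Hypothesis s0 : s 0 = 0.
Hypothesis sD : {morph s : a b / a + b}.

Local Notation ev := (evalp s phi).

Lemma evalpEw (D : {fset {fmonom V}}) (f : FreeAlg F V) : (msupp f `<=` D)%fset ->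
  ev f = \sum_(k <- D) s f@_k * \prod_(v <- (k : seq V)) phi v.
Proof.
move=> le; rewrite /evalp [LHS](big_fset_incl _ le) => //= x xd /mcoeff_outdom ->.
by rewrite s0 mul0r.
Qed.

Lemma evalp0g : ev 0 = 0.
Proof. by rewrite /evalp msupp0 big_seq_fset0. Qed.

Lemma evalpDg (f g : FreeAlg F V) : ev (f + g) = ev f + ev g.
Proof.
pose D := (msupp f `|` msupp g)%fset.
rewrite (@evalpEw D (f + g)) ?msuppD_le // (@evalpEw D f) ?fsubsetUl //.
rewrite (@evalpEw D g) ?fsubsetUr // -big_split /=.
by apply: eq_bigr => k _; rewrite mcoeffD sD mulrDl.
Qed.

Lemma evalp_sumg (I : Type) (r : seq I) (P : pred I) (h : I -> FreeAlg F V) :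
  ev (\sum_(i <- r | P i) h i) = \sum_(i <- r | P i) ev (h i).
Proof. exact: (big_morph _ evalpDg evalp0g). Qed.

Lemma evalpUg (c : F) (m : fmonom V) :
  ev << c *g m >> = s c * \prod_(v <- (m : seq V)) phi v.
Proof. by rewrite (@evalpEw _ _ msuppU_le) big_seq_fset1 mcoeffUU. Qed.

Hypothesis sM : {morph s : a b / a * b}.
Hypothesis comm_s : forall c v, GRing.comm (s c) (phi v).

Lemma evalpMg (f g : FreeAlg F V) : ev (f * g) = ev f * ev g.
Proof.
rewrite malgME.
transitivity (\sum_(i <- msupp f) ev (\sum_(j <- msupp g)
    << f@_i * g@_j *g (mmul i j) >>)); first exact: evalp_sumg.
rewrite /evalp mulr_suml; apply: eq_bigr => i _.
transitivity (\sum_(j <- msupp g) ev << f@_i * g@_j *g (mmul i j) >>);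
  first exact: evalp_sumg.
rewrite mulr_sumr; apply: eq_bigr => j _.
rewrite evalpUg sM fmM big_cat /= -!mulrA; congr (_ * _).
rewrite !mulrA; congr (_ * _).
have: GRing.comm (s g@_j) (\prod_(v <- (i : seq V)) phi v).
  by apply: commr_prod => v _; apply: comm_s.
by rewrite /GRing.comm => ->.
Qed.
End EvalGen.

Lemma scal_comm (R : pzRingType) n (a : R) (M : 'M[R]_n) :
  (forall b, a * b = b * a) -> a%:M * M = M * a%:M.
Proof.
move=> ca; change (a%:M *m M = M *m a%:M); apply/matrixP => i j; rewrite !mxE.
transitivity (a * M i j).
  rewrite (bigD1 i) //= big1 ?addr0; first by rewrite !mxE eqxx mulr1n.
  by move=> k /negbTE nk; rewrite !mxE eq_sym nk mulr0n mul0r.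
rewrite ca (bigD1 j) //= big1 ?addr0; first by rewrite !mxE eqxx mulr1n.
by move=> k /negbTE nk; rewrite !mxE nk mulr0n mulr0.
Qed.
Lemma malgC_comm (F : fieldType) (V : choiceType) (c : F) (r : FreeAlg F V) :
  c%:MP * r = r * c%:MP.
Proof.
rewrite !malgM_def fgmulUg fgmulgU; apply: eq_bigr => k _.
by rewrite mulrC mul1m mulm1.
Qed.

Section UGA.
Variables (F : fieldType) (G : finGroupType) (A : algType F) (Ag : G -> A -> Prop).
Local Notation R := (FreeAlg F (XUvar G)).
Local Notation U := (UGA Ag).
Local Notation piU := (@piU F G A Ag).

Lemma piUD (x y : R) : piU (x + y) = piU x + piU y.
Proof. exact: pi_addr. Qed.
Lemma piU0 : piU 0 = 0.
Proof. exact: pi_zeror. Qed.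
Lemma piUM (x y : R) : piU (x * y) = piU x * piU y.
Proof. exact: pi_UG_mul. Qed.
Lemma piU1 : piU 1 = 1.
Proof. exact: pi_UG_one. Qed.
Lemma piU_repr (u : U) : u = piU (repr (u : UG Ag (@fst G _))).
Proof. by rewrite /piU /piUG reprK. Qed.
Lemma piU_eq0 (r : R) : piU r = 0 <-> TG Ag (@fst G _) r.
Proof.
rewrite -piU0; split.
  move/eqP; rewrite /piU /piUG piE Quotient.equivE subr0.
  by move/pboolP.
move=> h; apply/eqP; rewrite /piU /piUG piE Quotient.equivE subr0.
exact/pboolP.
Qed.
Lemma piU_surj (u : U) : exists r, u = piU r.
Proof. by exists (repr (u : UG Ag (@fst G _))); apply: piU_repr. Qed.

Record gsub := GSub { gpsi :> XUvar G -> A; gpsiP : forall v, Ag v.1 (gpsi v) }.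
Variable (p : gsub).
Local Notation psi := (gpsi p).
Local Notation Hpsi := (gpsiP p).

Definition evU (u : U) : A := evalp (GRing.in_alg A) psi (repr (u : UG Ag (@fst G _))).

Lemma evU_pi r : evU (piU r) = evalp (GRing.in_alg A) psi r.
Proof.
rewrite /evU /piU /piUG.
have hx : r - repr (\pi_(UG Ag (@fst G _)) r) \in TGb Ag (@fst G _).
  by rewrite Quotient.idealrBE reprK.
move/pboolP: hx => /(_ psi Hpsi); rewrite evalpB => /eqP.
by rewrite subr_eq0 => /eqP ->.
Qed.

Lemma evUD : {morph evU : x y / x + y}.
Proof.
move=> x y; case: (piU_surj x) => a ->; case: (piU_surj y) => b ->.
by rewrite -piUD !evU_pi !evalpE mmapD.
Qed.

Lemma evU0 : evU 0 = 0.
Proof. by rewrite -piU0 evU_pi evalp0. Qed.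

Lemma evUM : {morph evU : x y / x * y}.
Proof.
move=> x y; case: (piU_surj x) => a ->; case: (piU_surj y) => b ->.
by rewrite -piUM !evU_pi evalpM.
Qed.

Lemma evU1 : evU 1 = 1.
Proof. by rewrite -piU1 evU_pi evalpE mmap1. Qed.

Lemma evUB : zmod_morphism evU.
Proof.
move=> x y; have h := evUD (x - y) y; rewrite subrK in h.
by rewrite h addrK.
Qed.

HB.instance Definition _ := GRing.isZmodMorphism.Build U A evU evUB.
HB.instance Definition _ := GRing.isMonoidMorphism.Build U A evU (evU1, evUM).
End UGA.

Section Main.
Variables (F : fieldType) (G : finGroupType) (A : algType F)
  (Ag : G -> A -> Prop) (ds : seq nat).
Local Notation d := (sumn ds).
Local Notation U := (UGA Ag).
Local Notation piU := (@piU F G A Ag).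
Local Notation scalU := (@scalU F G A Ag ds).
Local Notation xi := (@xi F G A Ag ds).
Local Notation Phi := (@Phi F G A Ag ds).
Local Notation xi' := (fun v : Xvar G => xi v.1 v.2).

Lemma scalU0 : scalU 0 = 0.
Proof. by rewrite /Defs.scalU malgC0E piU0 raddf0. Qed.

Lemma scalUD : {morph scalU : a b / a + b}.
Proof. by move=> a b; rewrite /Defs.scalU raddfD piUD raddfD. Qed.

Lemma scalUM : {morph scalU : a b / a * b}.
Proof. by move=> a b; rewrite /Defs.scalU mpolyCM piUM scalar_mxM. Qed.

Lemma scalU1 : scalU 1 = 1.
Proof. by rewrite /Defs.scalU mpolyC1E piU1. Qed.

Lemma scalU_comm c (M : 'M[U]_d) : GRing.comm (scalU c) M.
Proof.
rewrite /GRing.comm /Defs.scalU scal_comm // => b.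
case: (piU_surj b) => r ->; by rewrite -!piUM malgC_comm.
Qed.

Lemma PhiD f g : Phi (f + g) = Phi f + Phi g.
Proof. exact: (evalpDg xi' scalU0 scalUD). Qed.

Lemma PhiM f g : Phi (f * g) = Phi f * Phi g.
Proof.
apply: (evalpMg scalU0 scalUD scalUM) => c v; exact: scalU_comm.
Qed.

Lemma PhiC c : Phi c%:MP = scalU c.
Proof. by rewrite /Phi (evalpUg xi' scalU0) fm1 big_nil mulr1. Qed.

Lemma Phi1 : Phi 1 = 1.
Proof. by rewrite -mpolyC1E PhiC scalU1. Qed.

Lemma Phi_var g k : Phi (pvar F ((g, k) : Xvar G)) = xi g k.
Proof.
rewrite /Phi /pvar (evalpUg xi' scalU0) scalU1 mul1r fmuE /=.
by rewrite big_cons big_nil mulr1.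
Qed.


Lemma in_Ud0 : @in_Ud F G A Ag ds 0.
Proof.
have h := Ud_scale 0 (@Ud_one F G A Ag ds).
by rewrite scalU0 mul0r in h.
Qed.

Lemma part1 f : @in_Ud F G A Ag ds (Phi f).
Proof.
rewrite /Defs.Phi /evalp.
apply: (big_ind (@in_Ud F G A Ag ds)); [exact: in_Ud0 | exact: Ud_add|].
move=> m _; apply: Ud_scale.
apply: (big_ind (@in_Ud F G A Ag ds)); [exact: Ud_one | exact: Ud_mul|].
move=> v _; exact: Ud_gen.
Qed.

Lemma part2 M : @in_Ud F G A Ag ds M -> exists f, Phi f = M.
Proof.
elim=> [g k||c M1 _ [f <-]|M1 N _ [f <-] _ [h <-]|M1 N _ [f <-] _ [h <-]].
- by exists (pvar F ((g, k) : Xvar G)); apply: Phi_var.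
- by exists 1; apply: Phi1.
- by exists (c%:MP * f); rewrite PhiM PhiC.
- by exists (f + h); rewrite PhiD.
- by exists (f * h); rewrite PhiM.
Qed.

Section Ev.
Variable p : gsub Ag.
Local Notation E := (map_mx (evU p)).

Lemma evalp_pvar (v : XUvar G) : evalp (GRing.in_alg A) p (pvar F v) = p v.
Proof.
by rewrite evalpE /pvar mmapU /= /prodv fmuE /= big_cons big_nil mulr1 scale1r mul1r.
Qed.

Lemma E_xi g k (i j : 'I_d) : E (xi g k) i j =
  if (blk ds i <= blk ds j)%N then p (g, (val i, val j, k)) else 0.
Proof.
rewrite !mxE; case: ifP => _; last exact: rmorph0.
by rewrite /xU evU_pi evalp_pvar.
Qed.

Lemma Eprod (r : seq (Xvar G)) :
  E (\prod_(v <- r) xi v.1 v.2) = \prod_(v <- r) E (xi v.1 v.2).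
Proof.
elim: r => [|v r IH]; first by rewrite !big_nil; exact: map_mx1.
rewrite !big_cons -IH; exact: map_mxM.
Qed.

Lemma EPhi f : E (Phi f) =
  evalp (fun c : F => (c%:A : A)%:M) (fun v : Xvar G => E (xi v.1 v.2)) f.
Proof.
rewrite /Defs.Phi /evalp (big_morph E (@map_mxD _ _ (evU p) d d) (@map_mx0 _ _ (evU p) d d)).
apply: eq_bigr => m _.
transitivity (E (scalU f@_m) * E (\prod_(v <- (m : seq (Xvar G))) xi v.1 v.2)).
  exact: map_mxM.
rewrite Eprod; congr (_ * _).
transitivity ((evU p (piU (f@_m)%:MP))%:M : 'M[A]_d); first exact: map_scalar_mx.
by rewrite evU_pi evalpE mmapC.
Qed.
End Ev.


Lemma evalp_ext (S : pzRingType) (s : F -> S) (phi1 phi2 : Xvar G -> S) f :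
  (forall v, phi1 v = phi2 v) -> evalp s phi1 f = evalp s phi2 f.
Proof.
move=> h; apply: eq_bigr => m _; congr (_ * _); apply: eq_bigr => v _; exact: h.
Qed.

Hypothesis Ag0 : forall g, Ag g 0.

Lemma part3a f : Phi f = 0 -> TG_UT Ag ds f.
Proof.
move=> h0 phi hphi.
pose psi (v : XUvar G) : A :=
  match insub v.2.1.1, insub v.2.1.2 with
  | Some i, Some j => phi (v.1, v.2.2) i j
  | _, _ => 0 end.
have Hpsi : forall v, Ag v.1 (psi v).
  move=> [g [[i j] k]]; rewrite /psi /=.
  case: (insub i) => [i'|]; last exact: Ag0.
  case: (insub j) => [j'|]; last exact: Ag0.
  by case: (hphi (g, k)) => _; apply.
pose pp := GSub Hpsi.
have hE : forall v, phi v = map_mx (evU pp) (xi v.1 v.2).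
  move=> [g k]; apply/matrixP => i j; rewrite E_xi /=; case: ifP => hij.
    by rewrite /psi /= !valK.
  case: (hphi (g, k)) => hb _; apply: hb; by rewrite ltnNge hij.
rewrite (evalp_ext _ _ hE) -EPhi h0; exact: map_mx0.
Qed.


Lemma part3b f : TG_UT Ag ds f -> Phi f = 0.
Proof.
move=> hT; apply/matrixP => i j; rewrite [RHS]mxE.
case: (piU_surj (Phi f i j)) => r hr; rewrite hr; apply/piU_eq0 => psi Hpsi.
pose pp := GSub Hpsi.
have -> : evalp (GRing.in_alg A) psi r = evU pp (Phi f i j) by rewrite hr evU_pi.
have -> : evU pp (Phi f i j) = map_mx (evU pp) (Phi f) i j by rewrite mxE.
rewrite EPhi hT ?mxE //.
move=> [g k] /=; split.
  by move=> i' j' hlt; rewrite E_xi leqNgt hlt.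
move=> i' j'; rewrite E_xi; case: ifP => _; last exact: Ag0.
exact: (Hpsi (g, (val i', val j', k))).
Qed.

End Main.

Local Close Scope quotient_scope.

Theorem lemma5p1 (F : fieldType) (G : finGroupType) (A : algType F)
    (Ag : G -> A -> Prop) (ds : seq nat) :
  [pchar F] =i pred0 ->
  is_Ggrading Ag ->
  is_GPI Ag ->
  (0 < size ds)%N -> all (fun di => 0 < di)%N ds ->
  (forall f : FreeAlg F (Xvar G), @in_Ud F G A Ag ds (@Phi F G A Ag ds f)) /\
  (forall M, @in_Ud F G A Ag ds M -> exists f, @Phi F G A Ag ds f = M) /\
  (forall f : FreeAlg F (Xvar G), @Phi F G A Ag ds f = 0 <-> TG_UT Ag ds f).
Proof.
move=> _ [hg _ _ _] _ _ _.
have Ag0 : forall g, Ag g 0 by move=> g; case: (hg g).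
split; first exact: part1.
split; first exact: part2.
move=> f; split; [exact: part3a | exact: part3b].
Qed.
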